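(* Let $(a_n)_{n\ge1}$ be a sequence of real numbers with $\lim_{n\to\infty}a_n=\infty$, and let $\gamma>0$. Then there exists a sequence of positive integers $(r_n)_{n\ge0}$ such that $$\limsup_{n\to\infty}\frac{2^{n+1}a_n}{\sum_{i=1}^{n}2^i\,r_0r_1\cdots r_{i-1}}=\gamma.$$ Here the denominator is $2r_0+4r_0r_1+\dots+2^nr_0\cdots r_{n-1}$. *)

(* Defs.v *)
From Stdlib Require Import Reals Lra Lia.
Open Scope R_scope.

Fixpoint prod_r (r : nat -> nat) (i : nat) : R :=
  match i with
  | O => 1
  | S k => prod_r r k * INR (r k)
  end.

Fixpoint denom (r : nat -> nat) (n : nat) : R :=
  match n with
  | O => 0
  | S k => denom r k + 2 ^ (S k) * prod_r r (S k)
  end.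

Definition limsup_eq (u : nat -> R) (L : R) : Prop :=
  (forall eps : R, eps > 0 -> exists N : nat, forall n : nat, (n >= N)%nat -> u n < L + eps) /\
  (forall eps : R, eps > 0 -> forall N : nat, exists n : nat, (n >= N)%nat /\ u n > L - eps).

(* Main.v *)
Require Import Defs.
From Stdlib Require Import Reals Lra Lia ZArith ClassicalEpsilon.
Open Scope R_scope.

Definition lam (a : nat -> R) (g D : R) (J0 i : nat) : R :=
  (2 ^ (S (S J0 + i)) * a (S J0 + i)%nat / g - D) / (2 ^ (S (S J0 + i)) - 2 ^ (S J0)).

Fixpoint Lmax (a : nat -> R) (g D : R) (J0 m : nat) : R :=
  match m with
  | O => lam a g D J0 0
  | S m' => Rmax (Lmax a g D J0 m') (lam a g D J0 (S m'))
  end.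

Lemma Q_pos (J0 i : nat) : 0 < 2 ^ (S (S J0 + i)) - 2 ^ (S J0).
Proof.
  assert (2 ^ (S J0) < 2 ^ (S (S J0 + i))) by (apply Rlt_pow; [lra | lia]). lra.
Qed.

Lemma Lmax_ge a g D J0 m : forall i, (i <= m)%nat -> lam a g D J0 i <= Lmax a g D J0 m.
Proof.
  induction m as [|m IH]; intros i Hi.
  - replace i with 0%nat by lia. simpl. lra.
  - simpl. destruct (Nat.eq_dec i (S m)) as [->|Hne].
    + apply Rmax_r.
    + eapply Rle_trans; [apply IH; lia | apply Rmax_l].
Qed.

Lemma Lmax_att a g D J0 m : exists i, (i <= m)%nat /\ Lmax a g D J0 m = lam a g D J0 i.
Proof.
  induction m as [|m [i [Hi Heq]]].
  - exists 0%nat. split; [lia | reflexivity].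
  - simpl. unfold Rmax. destruct (Rle_dec _ _).
    + exists (S m). split; [lia | reflexivity].
    + exists i. split; [lia | exact Heq].
Qed.

Lemma exists_m a g D J0 P : cv_infty a -> g > 0 -> P >= 0 ->
  exists m, Lmax a g D J0 m >= INR (S J0) * P.
Proof.
  intros Hcv Hg HP.
  set (A := INR (S J0) * P).
  assert (HA : 0 <= A) by (unfold A; apply Rmult_le_pos; [apply pos_INR | lra]).
  destruct (Hcv (g * (A + Rabs D))) as [N HN].
  exists N. apply Rle_ge. eapply Rle_trans; [| apply (Lmax_ge _ _ _ _ N N); lia].
  unfold lam.
  specialize (HN (S J0 + N)%nat ltac:(lia)).
  set (y := a (S J0 + N)%nat) in *.
  set (p := 2 ^ (S (S J0 + N))).
  set (q := 2 ^ (S J0)).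
  assert (Hq : 0 < p - q) by apply Q_pos.
  assert (Hq0 : 0 < q) by (apply pow_lt; lra).
  assert (Hp1 : 1 <= p) by (unfold p; apply pow_R1_Rle; lra).
  assert (Hy : y / g > A + Rabs D).
  { apply Rmult_gt_reg_l with g; [lra|]. field_simplify; lra. }
  assert (Ha : p * y / g - D >= A * (p - q)).
  { replace (p * y / g) with (p * (y / g)) by (field; lra).
    pose proof (Rle_abs D). pose proof (Rabs_pos D).
    nra. }
  apply Rmult_le_reg_r with (p - q); [lra|].
  replace ((p * y / g - D) / (p - q) * (p - q)) with (p * y / g - D) by (field; lra). lra.
Qed.
Record st := mkst { sJ : nat; sD : R; sP : R }.

Definition sm a g (s : st) : nat :=
  epsilon (inhabits 0%nat) (fun m => Lmax a g (sD s) (sJ s) m >= INR (S (sJ s)) * sP s).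
Definition sk a g (s : st) : nat :=
  Z.to_nat (up (Lmax a g (sD s) (sJ s) (sm a g s) / sP s)).
Definition step a g (s : st) : st :=
  mkst (S (sJ s) + sm a g s)
       (sD s + INR (sk a g s) * sP s * (2 ^ (S (S (sJ s) + sm a g s)) - 2 ^ (S (sJ s))))
       (INR (sk a g s) * sP s).
Fixpoint stt a g (j : nat) : st :=
  match j with O => mkst 0 0 1 | S j' => step a g (stt a g j') end.
Definition rr a g (i : nat) : nat :=
  let j := epsilon (inhabits 0%nat) (fun j => sJ (stt a g j) = i) in
  if Nat.eq_dec (sJ (stt a g j)) i then sk a g (stt a g j) else 1%nat.

Lemma step_props a g s : cv_infty a -> g > 0 -> sP s >= 1 ->
  Lmax a g (sD s) (sJ s) (sm a g s) >= INR (S (sJ s)) * sP s /\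
  INR (sk a g s) > Lmax a g (sD s) (sJ s) (sm a g s) / sP s /\
  INR (sk a g s) <= Lmax a g (sD s) (sJ s) (sm a g s) / sP s + 1 /\
  INR (sk a g s) >= INR (S (sJ s)) /\ (sk a g s >= 1)%nat.
Proof.
  intros Hcv Hg HP.
  assert (H1 : Lmax a g (sD s) (sJ s) (sm a g s) >= INR (S (sJ s)) * sP s).
  { unfold sm. apply epsilon_spec.
    apply exists_m; auto; lra. }
  set (x := Lmax a g (sD s) (sJ s) (sm a g s) / sP s).
  assert (Hx : x >= INR (S (sJ s))).
  { unfold x. apply Rle_ge. apply Rmult_le_reg_r with (sP s); [lra|].
    replace (Lmax a g (sD s) (sJ s) (sm a g s) / sP s * sP s)
      with (Lmax a g (sD s) (sJ s) (sm a g s)) by (field; lra). lra. }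
  assert (H1J : 1 <= INR (S (sJ s))) by (rewrite S_INR; pose proof (pos_INR (sJ s)); lra).
  destruct (archimed x) as [Hu1 Hu2].
  assert (Hz : (0 < up x)%Z) by (apply lt_0_IZR; lra).
  assert (Hk : INR (sk a g s) = IZR (up x)).
  { unfold sk. fold x. rewrite INR_IZR_INZ, Z2Nat.id; [reflexivity | lia]. }
  rewrite Hk. fold x.
  split; [exact H1|]. split; [lra|]. split; [lra|]. split; [lra|].
  apply INR_le. rewrite Hk. simpl. lra.
Qed.
Lemma prod_S r n : prod_r r (S n) = prod_r r n * INR (r n).
Proof. reflexivity. Qed.
Lemma denom_S r n : denom r (S n) = denom r n + 2 ^ (S n) * prod_r r (S n).
Proof. reflexivity. Qed.
Lemma pow2S n : 2 ^ (S n) = 2 * 2 ^ n.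
Proof. reflexivity. Qed.

Lemma hold (r : nat -> nat) J0 D P k m :
  denom r J0 = D -> prod_r r J0 = P -> r J0 = k ->
  (forall i, (1 <= i <= m)%nat -> r (J0 + i)%nat = 1%nat) ->
  forall i, (i <= m)%nat ->
    prod_r r (S J0 + i) = INR k * P /\
    denom r (S J0 + i) = D + INR k * P * (2 ^ (S (S J0 + i)) - 2 ^ (S J0)).
Proof.
  intros HD HP Hk H1 i.
  induction i as [|i IH]; intros Hi.
  - rewrite Nat.add_0_r. rewrite denom_S, !prod_S, HD, HP, Hk.
    split; [ring|]. rewrite (pow2S (S J0)). ring.
  - destruct IH as [IP ID]; [lia|].
    replace (S J0 + S i)%nat with (S (S J0 + i)) by lia.
    assert (Hr : r (S J0 + i)%nat = 1%nat) by (replace (S J0 + i)%nat with (J0 + S i)%nat by lia; apply H1; lia).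
    rewrite denom_S, !prod_S, Hr, IP, ID. simpl INR.
    split; [ring|]. rewrite (pow2S (S (S J0 + i))). ring.
Qed.


Lemma J_succ a g j : sJ (stt a g (S j)) = (S (sJ (stt a g j)) + sm a g (stt a g j))%nat.
Proof. reflexivity. Qed.

Lemma J_mono a g : forall j j', (j < j')%nat -> (sJ (stt a g j) < sJ (stt a g j'))%nat.
Proof.
  intros j j' H. induction H.
  - rewrite J_succ. lia.
  - rewrite J_succ. lia.
Qed.

Lemma J_ge a g j : (j <= sJ (stt a g j))%nat.
Proof. induction j; [lia|]. rewrite J_succ. lia. Qed.

Lemma rr_J a g j : rr a g (sJ (stt a g j)) = sk a g (stt a g j).
Proof.
  unfold rr.
  set (j' := epsilon _ _).
  assert (Hs : sJ (stt a g j') = sJ (stt a g j)).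
  { unfold j'. apply epsilon_spec with (P := fun j0 => sJ (stt a g j0) = sJ (stt a g j)). eauto. }
  destruct (Nat.eq_dec _ _) as [_|C]; [|contradiction].
  assert (j' = j).
  { destruct (Nat.lt_trichotomy j' j) as [Hl|[He|Hl]]; auto;
    pose proof (J_mono a g _ _ Hl); lia. }
  rewrite H. reflexivity.
Qed.

Lemma rr_mid a g j i : (sJ (stt a g j) < i < sJ (stt a g (S j)))%nat -> rr a g i = 1%nat.
Proof.
  intros Hi. unfold rr.
  destruct (Nat.eq_dec _ _) as [E|_]; [|reflexivity].
  exfalso. set (j' := epsilon _ _) in E. clearbody j'.
  destruct (Nat.lt_trichotomy j' j) as [Hl|[He|Hl]].
  - pose proof (J_mono a g _ _ Hl); lia.
  - subst. lia.
  - destruct (Nat.eq_dec j' (S j)) as [->|Hn]; [lia|].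
    assert (S j < j')%nat by lia. pose proof (J_mono a g _ _ H); lia.
Qed.

Lemma rr_ge1 a g : cv_infty a -> g > 0 -> (forall j, sP (stt a g j) >= 1) ->
  forall i, (rr a g i >= 1)%nat.
Proof.
  intros Hcv Hg HP i. unfold rr. destruct (Nat.eq_dec _ _); [|lia].
  apply (step_props a g _ Hcv Hg (HP _)).
Qed.

Lemma inv a g : cv_infty a -> g > 0 -> forall j,
  sD (stt a g j) = denom (rr a g) (sJ (stt a g j)) /\
  sP (stt a g j) = prod_r (rr a g) (sJ (stt a g j)) /\
  sP (stt a g j) >= 1 /\ sD (stt a g j) >= 0.
Proof.
  intros Hcv Hg j. induction j as [|j [ID [IP [IP1 ID0]]]].
  - simpl. repeat split; lra.
  - destruct (step_props a g (stt a g j) Hcv Hg IP1) as [_ [_ [_ [Hk Hk1]]]].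
    destruct (hold (rr a g) (sJ (stt a g j)) _ _ (sk a g (stt a g j)) (sm a g (stt a g j))
      (eq_sym ID) (eq_sym IP) (rr_J a g j)) with (i := sm a g (stt a g j)) as [HP2 HD2].
    { intros i Hi. apply (rr_mid a g j). rewrite J_succ. lia. }
    { lia. }
    rewrite J_succ. cbn [stt step sD sP]. rewrite HP2, HD2.
    assert (1 <= INR (sk a g (stt a g j))) by (apply (le_INR 1); lia).
    pose proof (Q_pos (sJ (stt a g j)) (sm a g (stt a g j))).
    assert (1 <= INR (sk a g (stt a g j)) * sP (stt a g j)) by nra.
    repeat split; try reflexivity. nra. nra.
Qed.
Lemma window a g : cv_infty a -> g > 0 -> forall j i, (i <= sm a g (stt a g j))%nat ->
  denom (rr a g) (S (sJ (stt a g j)) + i) =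
  sD (stt a g j) + INR (sk a g (stt a g j)) * sP (stt a g j) *
     (2 ^ (S (S (sJ (stt a g j)) + i)) - 2 ^ (S (sJ (stt a g j)))).
Proof.
  intros Hcv Hg j i Hi.
  destruct (inv a g Hcv Hg j) as [ID [IP _]].
  eapply hold; eauto. apply rr_J.
  intros i' Hi'. apply (rr_mid a g j). rewrite J_succ. lia.
Qed.

Lemma cover a g : forall j n, (1 <= n <= sJ (stt a g j))%nat ->
  exists j' i, (i <= sm a g (stt a g j'))%nat /\ n = (S (sJ (stt a g j')) + i)%nat.
Proof.
  induction j; intros n Hn.
  - simpl in Hn. lia.
  - rewrite J_succ in Hn.
    destruct (le_lt_dec n (sJ (stt a g j))) as [Hl|Hl].
    + apply IHj; lia.
    + exists j, (n - S (sJ (stt a g j)))%nat. split; lia.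
Qed.

Lemma u_eq a g D P (k : nat) J0 i :
  g > 0 -> D >= 0 -> P >= 1 ->
  let e := 2 ^ (S (S J0 + i)) * a (S J0 + i)%nat in
  let Q := 2 ^ (S (S J0 + i)) - 2 ^ (S J0) in
  lam a g D J0 i * Q = e / g - D.
Proof.
  intros. unfold lam. subst e Q. field. pose proof (Q_pos J0 i). lra.
Qed.

Theorem mainTheorem13 (a : nat -> R) (gamma : R) :
  cv_infty a -> gamma > 0 ->
  exists r : nat -> nat,
    (forall n : nat, (r n >= 1)%nat) /\
    limsup_eq (fun n => 2 ^ (S n) * a n / denom r n) gamma.
Proof.
  intros Hcv Hg.
  assert (HP1 : forall j, sP (stt a gamma j) >= 1) by (intro j; apply (inv a gamma Hcv Hg j)).
  exists (rr a gamma). split; [apply rr_ge1; auto|]. split.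
  - intros eps Heps. exists 1%nat. intros n Hn.
    destruct (cover a gamma n n) as [j [i [Hi ->]]].
    { pose proof (J_ge a gamma n). lia. }
    rewrite (window a gamma Hcv Hg j i Hi).
    destruct (inv a gamma Hcv Hg j) as [_ [_ [HP HD]]].
    destruct (step_props a gamma _ Hcv Hg HP) as [_ [Hk1 [_ [_ Hk]]]].
    set (s := stt a gamma j) in *.
    pose proof (Lmax_ge a gamma (sD s) (sJ s) (sm a gamma s) i Hi) as HL.
    pose proof (u_eq a gamma (sD s) (sP s) (sk a gamma s) (sJ s) i Hg HD HP) as HU.
    cbv zeta in HU.
    pose proof (Q_pos (sJ s) i) as HQ.
    set (Q := 2 ^ (S (S (sJ s) + i)) - 2 ^ (S (sJ s))) in *.
    set (e := 2 ^ (S (S (sJ s) + i)) * a (S (sJ s) + i)%nat) in *.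
    set (L := Lmax a gamma (sD s) (sJ s) (sm a gamma s)) in *.
    set (lm := lam a gamma (sD s) (sJ s) i) in *.
    set (K := INR (sk a gamma s)) in *.
    set (D := sD s) in *. set (P := sP s) in *.
    assert (HKP : L < K * P).
    { apply Rmult_lt_reg_r with (/ P). apply Rinv_0_lt_compat; lra.
      replace (K * P * / P) with K by (field; lra). unfold Rdiv in Hk1. lra. }
    assert (He : e / gamma - D < K * P * Q) by (rewrite <- HU; apply Rmult_lt_compat_r; lra).
    assert (He2 : e < gamma * (D + K * P * Q)).
    { replace e with (gamma * (e / gamma)) by (field; lra). apply Rmult_lt_compat_l; lra. }
    assert (0 < D + K * P * Q).
    { assert (1 <= K) by (unfold K; apply (le_INR 1); lia).
      assert (1 <= K * P) by nra. nra. }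
    replace (2 ^ S (S (sJ s) + i) * a (S (sJ s) + i)%nat) with e by reflexivity.
    apply Rlt_trans with gamma; [|lra].
    apply Rmult_lt_reg_r with (D + K * P * Q); [lra|].
    replace (e / (D + K * P * Q) * (D + K * P * Q)) with e by (field; lra). lra.
  - intros eps Heps N.
    set (j := Nat.max N (Z.to_nat (up (gamma / eps)))).
    destruct (inv a gamma Hcv Hg j) as [_ [_ [HP HD]]].
    destruct (step_props a gamma _ Hcv Hg HP) as [_ [Hk1 [Hk2 [HkJ Hk]]]].
    set (s := stt a gamma j) in *.
    destruct (Lmax_att a gamma (sD s) (sJ s) (sm a gamma s)) as [i [Hi HLi]].
    exists (S (sJ s) + i)%nat. split.
    { pose proof (J_ge a gamma j). unfold s. lia. }
    unfold s. rewrite (window a gamma Hcv Hg j i Hi). fold s.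
    pose proof (u_eq a gamma (sD s) (sP s) (sk a gamma s) (sJ s) i Hg HD HP) as HU.
    cbv zeta in HU.
    pose proof (Q_pos (sJ s) i) as HQ.
    set (Q := 2 ^ (S (S (sJ s) + i)) - 2 ^ (S (sJ s))) in *.
    set (e := 2 ^ (S (S (sJ s) + i)) * a (S (sJ s) + i)%nat) in *.
    set (L := Lmax a gamma (sD s) (sJ s) (sm a gamma s)) in *.
    set (lm := lam a gamma (sD s) (sJ s) i) in *.
    set (K := INR (sk a gamma s)) in *.
    set (D := sD s) in *. set (P := sP s) in *.
    assert (HKg : K > gamma / eps).
    { destruct (archimed (gamma / eps)) as [Hu _].
      assert (Hj : (Z.to_nat (up (gamma / eps)) <= sJ s)%nat).
      { pose proof (J_ge a gamma j). unfold s. lia. }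
      assert (INR (Z.to_nat (up (gamma / eps))) <= INR (sJ s)) by (apply le_INR; exact Hj).
      assert (gamma / eps < INR (Z.to_nat (up (gamma / eps))) + 1).
      { destruct (Z_le_gt_dec 0 (up (gamma / eps))) as [Hz|Hz].
        - rewrite INR_IZR_INZ, Z2Nat.id by exact Hz. lra.
        - assert (IZR (up (gamma / eps)) <= -1) by (apply IZR_le; lia).
          pose proof (pos_INR (Z.to_nat (up (gamma / eps)))). lra. }
      rewrite S_INR in HkJ. lra. }
    assert (HLK : (K - 1) * P <= L).
    { apply Rmult_le_reg_r with (/ P). apply Rinv_0_lt_compat; lra.
      replace ((K - 1) * P * / P) with (K - 1) by (field; lra). unfold Rdiv in Hk2. lra. }
    assert (He : e / gamma - D >= (K - 1) * P * Q).
    { rewrite <- HU, <- HLi. apply Rle_ge, Rmult_le_compat_r; lra. }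
    assert (He2 : e >= gamma * (D + (K - 1) * P * Q)).
    { replace e with (gamma * (e / gamma)) by (field; lra). apply Rle_ge, Rmult_le_compat_l; lra. }
    assert (HK1 : 1 <= K) by (unfold K; apply (le_INR 1); lia).
    assert (HPQ : 0 < P * Q) by nra.
    assert (Hden : 0 < D + K * P * Q) by nra.
    assert (HeK : eps * K > gamma).
    { apply Rmult_gt_reg_l with (/ eps). apply Rinv_0_lt_compat; lra.
      replace (/ eps * (eps * K)) with K by (field; lra). unfold Rdiv in HKg. lra. }
    assert (Hmain : e > (gamma - eps) * (D + K * P * Q)).
    { assert (eps * (D + K * P * Q) >= eps * K * (P * Q)) by nra.
      assert (eps * K * (P * Q) > gamma * (P * Q)) by nra.
      nra. }
    replace (2 ^ S (S (sJ s) + i) * a (S (sJ s) + i)%nat) with e by reflexivity.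
    apply Rlt_gt. apply Rmult_lt_reg_r with (D + K * P * Q); [lra|].
    replace (e / (D + K * P * Q) * (D + K * P * Q)) with e by (field; lra). lra.
Qed.
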